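(* Let $\sigma$ be a monotone function on $(0,\infty)$ with $\sigma(y)\nearrow\infty$, and let $F$ be an entire function with $|F(x+iy)|\le e^{|y|\sigma(|y|)}$ for all $x+iy\in\mathbb{C}$. If $F$ has $n$ zeros on an interval $[a,b]$, then $$|F(x)|\le (b-a)^n\min_{y>0}\frac{e^{y\sigma(y)}}{y^n}\quad\text{for every } x\in[a,b].$$ *)

(* Defs.v *)
From Stdlib Require Import Reals.
From Coquelicot Require Import Coquelicot.
Open Scope R_scope.

Definition entire (F : C -> C) : Prop :=
  forall z : C, @ex_derive C_AbsRing C_NormedModule F z.

Fixpoint prod_lin (x : nat -> R) (n : nat) (z : C) : C :=
  match n with
  | O => 1%C
  | S m => Cmult (prod_lin x m z) (Cminus z (RtoC (x m)))
  end.

(* F has the n zeros x 0, ..., x (n-1) (listed with multiplicity, i.e.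
   a point repeated k times is a zero of order >= k): F factors as
   G(z) * prod_{i<n} (z - x i) with G entire. *)
Definition has_zeros (F : C -> C) (x : nat -> R) (n : nat) : Prop :=
  exists G : C -> C, entire G /\ forall z : C, F z = Cmult (G z) (prod_lin x n z).

(* Main.v *)
Require Import Defs.
From Stdlib Require Import Reals Lra Lia.
From Coquelicot Require Import Coquelicot.
Open Scope R_scope.


Lemma norm_CR (z : C) : @norm R_AbsRing C_R_NormedModule z = Cmod z.
Proof.
  destruct z as [u v].
  change (sqrt (Rabs u ^ 2 + Rabs v ^ 2) = Cmod (u, v)).
  unfold Cmod; simpl fst; simpl snd. rewrite !pow2_abs. reflexivity.
Qed.

Definition holo (f : C -> C) (z : C) := @ex_derive C_AbsRing C_NormedModule f z.

Definition ctc (f : C -> C) (z : C) :=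
  @continuous (AbsRing_UniformSpace C_AbsRing) (NormedModule.UniformSpace C_AbsRing C_NormedModule) f z.

Lemma holo_ctc f z : holo f z -> ctc f z.
Proof. apply ex_derive_continuous. Qed.

Lemma Cmod_hdiff (u s y : R) : Cmod ((u, y) - (s, y))%C = Rabs (u - s).
Proof.
  rewrite <- Cmod_R. f_equal. apply injective_projections; simpl; ring.
Qed.

Lemma Cmod_vdiff (x u s : R) : Cmod ((x, u) - (x, s))%C = Rabs (u - s).
Proof.
  rewrite <- Cmod_R. unfold Cmod. simpl. f_equal. ring.
Qed.

Lemma cont_h (f : C -> C) (s y : R) :
  ctc f (s, y) ->
  @continuous R_UniformSpace C_R_CompleteNormedModule (fun u => f (u, y)) s.
Proof.
  intros Hf. apply filterlim_locally. intros eps.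
  destruct (proj1 (filterlim_locally f (f _)) Hf eps) as [d Hd].
  exists d. intros u Hu. apply Hd.
  change (Cmod ((u, y) - (s, y))%C < d). rewrite Cmod_hdiff. exact Hu.
Qed.

Lemma cont_v (f : C -> C) (x s : R) :
  ctc f (x, s) ->
  @continuous R_UniformSpace C_R_CompleteNormedModule (fun v => f (x, v)) s.
Proof.
  intros Hf. apply filterlim_locally. intros eps.
  destruct (proj1 (filterlim_locally f (f _)) Hf eps) as [d Hd].
  exists d. intros u Hu. apply Hd.
  change (Cmod ((x, u) - (x, s))%C < d). rewrite Cmod_vdiff. exact Hu.
Qed.

Notation CR := C_R_CompleteNormedModule.

Lemma is_RInt_Cmult (g : R -> C) a b (l : C) (c : C) :
  is_RInt (V:=CR) g a b l -> is_RInt (V:=CR) (fun s => (c * g s)%C) a b (c * l)%C.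
Proof.
  intros H. destruct c as [c1 c2]. destruct l as [l1 l2].
  pose proof (is_RInt_fct_extend_fst (U:=R_NormedModule) (V:=R_NormedModule) g a b (l1,l2) H) as H1.
  pose proof (is_RInt_fct_extend_snd (U:=R_NormedModule) (V:=R_NormedModule) g a b (l1,l2) H) as H2.
  simpl in H1, H2.
  apply (is_RInt_fct_extend_pair (U:=R_NormedModule) (V:=R_NormedModule)).
  - simpl. apply (is_RInt_minus (V:=R_NormedModule) (fun t => c1 * fst (g t)) (fun t => c2 * snd (g t)));
      apply (is_RInt_scal (V:=R_NormedModule)); assumption.
  - simpl. apply (is_RInt_plus (V:=R_NormedModule) (fun t => c1 * snd (g t)) (fun t => c2 * fst (g t)));
      apply (is_RInt_scal (V:=R_NormedModule)); assumption.
Qed.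

Lemma ex_RInt_Cmult (g : R -> C) a b (c : C) :
  ex_RInt (V:=CR) g a b -> ex_RInt (V:=CR) (fun s => (c * g s)%C) a b.
Proof. intros [l H]. exists (c * l)%C. apply is_RInt_Cmult. exact H. Qed.

Lemma RInt_Cmult (g : R -> C) a b (c : C) :
  ex_RInt (V:=CR) g a b -> RInt (V:=CR) (fun s => (c * g s)%C) a b = (c * RInt (V:=CR) g a b)%C.
Proof.
  intros H. apply is_RInt_unique. apply is_RInt_Cmult. apply RInt_correct. exact H.
Qed.

Lemma RInt_Cplus (g h : R -> C) a b :
  ex_RInt (V:=CR) g a b -> ex_RInt (V:=CR) h a b ->
  RInt (V:=CR) (fun s => (g s + h s)%C) a b = (RInt (V:=CR) g a b + RInt (V:=CR) h a b)%C.
Proof. intros H1 H2. apply (RInt_plus (V:=CR) g h a b H1 H2). Qed.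

Lemma RInt_Cminus (g h : R -> C) a b :
  ex_RInt (V:=CR) g a b -> ex_RInt (V:=CR) h a b ->
  RInt (V:=CR) (fun s => (g s - h s)%C) a b = (RInt (V:=CR) g a b - RInt (V:=CR) h a b)%C.
Proof. intros H1 H2. apply (RInt_minus (V:=CR) g h a b H1 H2). Qed.

Lemma ex_RInt_Cplus (g h : R -> C) a b :
  ex_RInt (V:=CR) g a b -> ex_RInt (V:=CR) h a b ->
  ex_RInt (V:=CR) (fun s => (g s + h s)%C) a b.
Proof. intros H1 H2. apply (ex_RInt_plus (V:=CR) g h a b H1 H2). Qed.

Lemma ex_RInt_Cminus (g h : R -> C) a b :
  ex_RInt (V:=CR) g a b -> ex_RInt (V:=CR) h a b ->
  ex_RInt (V:=CR) (fun s => (g s - h s)%C) a b.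
Proof. intros H1 H2. apply (ex_RInt_minus (V:=CR) g h a b H1 H2). Qed.

Lemma Cmod_RInt_le (g : R -> C) a b M :
  a <= b -> ex_RInt (V:=CR) g a b -> (forall s, a <= s <= b -> Cmod (g s) <= M) ->
  Cmod (RInt (V:=CR) g a b) <= (b - a) * M.
Proof.
  intros Hab Hex Hb. rewrite <- norm_CR.
  apply (norm_RInt_le (V:=CR) g (fun _ => M) a b).
  - exact Hab.
  - intros s Hs. rewrite norm_CR. apply Hb. exact Hs.
  - apply RInt_correct. exact Hex.
  - apply (is_RInt_const (V:=R_NormedModule) a b M).
Qed.

Definition HI (f : C -> C) (y x0 x1 : R) : C := RInt (V:=CR) (fun u => f (u, y)) x0 x1.
Definition VI (f : C -> C) (x y0 y1 : R) : C := RInt (V:=CR) (fun v => f (x, v)) y0 y1.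
Definition J f x0 x1 y0 y1 : C :=
  (HI f y0 x0 x1 + Ci * VI f x1 y0 y1 - HI f y1 x0 x1 - Ci * VI f x0 y0 y1)%C.

Lemma exH f y x0 x1 : x0 <= x1 -> (forall u, x0 <= u <= x1 -> ctc f (u, y)) ->
  ex_RInt (V:=CR) (fun u => f (u,y)) x0 x1.
Proof.
  intros Hx Hc. apply ex_RInt_continuous. rewrite Rmin_left, Rmax_right by lra.
  intros z Hz. apply cont_h. apply Hc; lra.
Qed.

Lemma exV f x y0 y1 : y0 <= y1 -> (forall v, y0 <= v <= y1 -> ctc f (x, v)) ->
  ex_RInt (V:=CR) (fun v => f (x,v)) y0 y1.
Proof.
  intros Hx Hc. apply ex_RInt_continuous. rewrite Rmin_left, Rmax_right by lra.
  intros z Hz. apply cont_v. apply Hc; lra.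
Qed.

Lemma CChasles (g : R -> C) a b c : ex_RInt (V:=CR) g a b -> ex_RInt (V:=CR) g b c ->
  RInt (V:=CR) g a c = (RInt (V:=CR) g a b + RInt (V:=CR) g b c)%C.
Proof. intros H1 H2. symmetry. apply (RInt_Chasles (V:=CR) g a b c H1 H2). Qed.

Lemma J_splitX f x0 xm x1 y0 y1 :
  ex_RInt (V:=CR) (fun u => f (u,y0)) x0 xm -> ex_RInt (V:=CR) (fun u => f (u,y0)) xm x1 ->
  ex_RInt (V:=CR) (fun u => f (u,y1)) x0 xm -> ex_RInt (V:=CR) (fun u => f (u,y1)) xm x1 ->
  J f x0 x1 y0 y1 = (J f x0 xm y0 y1 + J f xm x1 y0 y1)%C.
Proof.
  intros H1 H2 H3 H4. unfold J, HI.
  rewrite (CChasles _ x0 xm x1 H1 H2), (CChasles _ x0 xm x1 H3 H4). ring.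
Qed.

Lemma J_splitY f x0 x1 y0 ym y1 :
  ex_RInt (V:=CR) (fun v => f (x0,v)) y0 ym -> ex_RInt (V:=CR) (fun v => f (x0,v)) ym y1 ->
  ex_RInt (V:=CR) (fun v => f (x1,v)) y0 ym -> ex_RInt (V:=CR) (fun v => f (x1,v)) ym y1 ->
  J f x0 x1 y0 y1 = (J f x0 x1 y0 ym + J f x0 x1 ym y1)%C.
Proof.
  intros H1 H2 H3 H4. unfold J, VI.
  rewrite (CChasles _ y0 ym y1 H1 H2), (CChasles _ y0 ym y1 H3 H4). ring.
Qed.

Definition bdc f x0 x1 y0 y1 :=
  (forall u, x0 <= u <= x1 -> ctc f (u,y0) /\ ctc f (u,y1)) /\
  (forall v, y0 <= v <= y1 -> ctc f (x0,v) /\ ctc f (x1,v)).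

Definition bnd (g : C -> C) M x0 x1 y0 y1 :=
  (forall u, x0 <= u <= x1 -> Cmod (g (u,y0)) <= M /\ Cmod (g (u,y1)) <= M) /\
  (forall v, y0 <= v <= y1 -> Cmod (g (x0,v)) <= M /\ Cmod (g (x1,v)) <= M).

Lemma Cmod_sub4 (a b c d : C) : Cmod (a + Ci * b - c - Ci * d)%C <= Cmod a + Cmod b + Cmod c + Cmod d.
Proof.
  unfold Cminus.
  eapply Rle_trans. apply Cmod_triangle. rewrite Cmod_opp.
  eapply Rle_trans. apply Rplus_le_compat_r. apply Cmod_triangle. rewrite Cmod_opp.
  eapply Rle_trans. apply Rplus_le_compat_r. apply Rplus_le_compat_r. apply Cmod_triangle.
  rewrite !Cmod_mult, Cmod_Ci. lra.
Qed.

Lemma J_bound g M x0 x1 y0 y1 : x0 <= x1 -> y0 <= y1 ->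
  bdc g x0 x1 y0 y1 -> bnd g M x0 x1 y0 y1 ->
  Cmod (J g x0 x1 y0 y1) <= 2 * (x1 - x0) * M + 2 * (y1 - y0) * M.
Proof.
  intros Hx Hy [Fh Fv] [Bh Bv]. unfold J, HI, VI.
  eapply Rle_trans. apply Cmod_sub4.
  assert (A1 : Cmod (RInt (V:=CR) (fun u => g (u, y0)) x0 x1) <= (x1 - x0) * M).
  { apply Cmod_RInt_le; [lra | apply (exH g y0); [lra | intros u Hu; apply (Fh u Hu)] | intros u Hu; apply (Bh u Hu)]. }
  assert (A2 : Cmod (RInt (V:=CR) (fun u => g (u, y1)) x0 x1) <= (x1 - x0) * M).
  { apply Cmod_RInt_le; [lra | apply (exH g y1); [lra | intros u Hu; apply (Fh u Hu)] | intros u Hu; apply (Bh u Hu)]. }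
  assert (A3 : Cmod (RInt (V:=CR) (fun v => g (x0, v)) y0 y1) <= (y1 - y0) * M).
  { apply Cmod_RInt_le; [lra | apply (exV g x0); [lra | intros u Hu; apply (Fv u Hu)] | intros u Hu; apply (Bv u Hu)]. }
  assert (A4 : Cmod (RInt (V:=CR) (fun v => g (x1, v)) y0 y1) <= (y1 - y0) * M).
  { apply Cmod_RInt_le; [lra | apply (exV g x1); [lra | intros u Hu; apply (Fv u Hu)] | intros u Hu; apply (Bv u Hu)]. }
  lra.
Qed.

Lemma J_minus f g x0 x1 y0 y1 : x0 <= x1 -> y0 <= y1 ->
  bdc f x0 x1 y0 y1 -> bdc g x0 x1 y0 y1 ->
  J (fun w => f w - g w)%C x0 x1 y0 y1 = (J f x0 x1 y0 y1 - J g x0 x1 y0 y1)%C.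
Proof.
  intros Hx Hy [Fh Fv] [Gh Gv].
  assert (E1 := exH f y0 x0 x1 Hx (fun u Hu => proj1 (Fh u Hu))).
  assert (E2 := exH f y1 x0 x1 Hx (fun u Hu => proj2 (Fh u Hu))).
  assert (E3 := exV f x0 y0 y1 Hy (fun u Hu => proj1 (Fv u Hu))).
  assert (E4 := exV f x1 y0 y1 Hy (fun u Hu => proj2 (Fv u Hu))).
  assert (G1 := exH g y0 x0 x1 Hx (fun u Hu => proj1 (Gh u Hu))).
  assert (G2 := exH g y1 x0 x1 Hx (fun u Hu => proj2 (Gh u Hu))).
  assert (G3 := exV g x0 y0 y1 Hy (fun u Hu => proj1 (Gv u Hu))).
  assert (G4 := exV g x1 y0 y1 Hy (fun u Hu => proj2 (Gv u Hu))).
  unfold J, HI, VI.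
  rewrite (RInt_Cminus _ _ _ _ E1 G1), (RInt_Cminus _ _ _ _ E2 G2),
    (RInt_Cminus _ _ _ _ E3 G3), (RInt_Cminus _ _ _ _ E4 G4).
  ring.
Qed.

Lemma J_Cmult c f x0 x1 y0 y1 : x0 <= x1 -> y0 <= y1 ->
  bdc f x0 x1 y0 y1 ->
  J (fun w => c * f w)%C x0 x1 y0 y1 = (c * J f x0 x1 y0 y1)%C.
Proof.
  intros Hx Hy [Fh Fv].
  assert (E1 := exH f y0 x0 x1 Hx (fun u Hu => proj1 (Fh u Hu))).
  assert (E2 := exH f y1 x0 x1 Hx (fun u Hu => proj2 (Fh u Hu))).
  assert (E3 := exV f x0 y0 y1 Hy (fun u Hu => proj1 (Fv u Hu))).
  assert (E4 := exV f x1 y0 y1 Hy (fun u Hu => proj2 (Fv u Hu))).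
  unfold J, HI, VI.
  rewrite (RInt_Cmult _ _ _ c E1), (RInt_Cmult _ _ _ c E2),
    (RInt_Cmult _ _ _ c E3), (RInt_Cmult _ _ _ c E4).
  ring.
Qed.

Lemma is_RInt_Rid a b : is_RInt (V:=R_NormedModule) (fun s => s) a b ((b*b - a*a)/2).
Proof.
  replace ((b*b - a*a)/2) with (minus (b*b/2) (a*a/2)).
  2:{ unfold minus, plus, opp; simpl. field. }
  apply (is_RInt_derive (V:=R_CompleteNormedModule) (fun s => s*s/2) (fun s => s)).
  - intros s _. auto_derive; [exact I | field].
  - intros s _. apply continuous_id.
Qed.

Lemma is_RInt_RtoC_id a b : is_RInt (V:=CR) (fun s => RtoC s) a b (RtoC ((b*b - a*a)/2)).
Proof.
  apply (is_RInt_fct_extend_pair (U:=R_NormedModule) (V:=R_NormedModule)); simpl.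
  - apply is_RInt_Rid.
  - assert (H := is_RInt_const (V:=R_NormedModule) a b 0).
    unfold scal in H; simpl in H; unfold mult in H; simpl in H.
    rewrite Rmult_0_r in H. exact H.
Qed.

Lemma is_RInt_Cconst a b (c : C) : is_RInt (V:=CR) (fun _ => c) a b (RtoC (b - a) * c)%C.
Proof.
  replace (RtoC (b - a) * c)%C with (scal (V:=C_R_NormedModule) (b - a) c).
  - apply is_RInt_const.
  - destruct c as [c1 c2]. unfold scal; simpl. unfold prod_scal; simpl.
    unfold scal; simpl; unfold mult; simpl.
    apply injective_projections; simpl; ring.
Qed.

Ltac ceq := match goal with |- ?a = ?b => change (@eq C a b) end.

Lemma pair_eq (u v : R) : ((u, v) : C) = (RtoC u + Ci * RtoC v)%C.
Proof. apply injective_projections; simpl; ring. Qed.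

Lemma HI_aff c0 l p y x0 x1 :
  HI (fun w => c0 + l * (w - p))%C y x0 x1 =
  (RtoC (x1 - x0) * (c0 + l * (Ci * RtoC y - p)) + l * RtoC ((x1*x1 - x0*x0)/2))%C.
Proof.
  unfold HI. apply (is_RInt_unique (V:=CR)).
  apply (is_RInt_ext (fun s => (c0 + l * (Ci * RtoC y - p)) + l * RtoC s)%C).
  - intros s _. ceq. rewrite pair_eq. ring.
  - apply (is_RInt_plus (V:=CR)).
    + apply is_RInt_Cconst.
    + apply is_RInt_Cmult. apply is_RInt_RtoC_id.
Qed.

Lemma VI_aff c0 l p x y0 y1 :
  VI (fun w => c0 + l * (w - p))%C x y0 y1 =
  (RtoC (y1 - y0) * (c0 + l * (RtoC x - p)) + (l * Ci) * RtoC ((y1*y1 - y0*y0)/2))%C.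
Proof.
  unfold VI. apply (is_RInt_unique (V:=CR)).
  apply (is_RInt_ext (fun s => (c0 + l * (RtoC x - p)) + (l * Ci) * RtoC s)%C).
  - intros s _. ceq. rewrite pair_eq. ring.
  - apply (is_RInt_plus (V:=CR)).
    + apply is_RInt_Cconst.
    + apply is_RInt_Cmult. apply is_RInt_RtoC_id.
Qed.

Lemma J_aff c0 l p x0 x1 y0 y1 : J (fun w => c0 + l * (w - p))%C x0 x1 y0 y1 = 0%C.
Proof.
  unfold J. rewrite !HI_aff, !VI_aff.
  destruct c0 as [c1 c2], l as [l1 l2], p as [p1 p2].
  apply injective_projections; simpl; field.
Qed.


Lemma deriv_eps (f : C -> C) (p l : C) :
  @is_derive C_AbsRing C_NormedModule f p l ->
  forall eps, 0 < eps -> exists d, 0 < d /\ forall w : C,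
    Cmod (w - p)%C < d ->
    Cmod (f w - f p - l * (w - p))%C <= eps * Cmod (w - p)%C.
Proof.
  intros [_ Hd] eps Heps.
  specialize (Hd p (fun P H => H) (mkposreal eps Heps)).
  destruct Hd as [d Hd']. exists d. split; [apply cond_pos|].
  intros w H1.
  assert (Hb : @ball (AbsRing_UniformSpace C_AbsRing) p d w) by exact H1.
  specialize (Hd' w Hb). simpl in Hd'.
  change (Cmod (minus (minus (f w) (f p)) (scal (minus w p) l)) <= eps * Cmod (minus w p)) in Hd'.
  replace (f w - f p - l * (w - p))%C with (minus (minus (f w) (f p)) (scal (minus w p) l)).
  - exact Hd'.
  - unfold minus, plus, opp, scal; simpl. unfold mult; simpl. ring.
Qed.

Lemma bridge (f : C -> C) z l : @is_derive C_AbsRing (AbsRing_NormedModule C_AbsRing) f z l -> @is_derive C_AbsRing C_NormedModule f z l.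
Proof. intros [H1 H2]. split. apply is_linear_scal_l. exact H2. Qed.
Lemma bridge2 (f : C -> C) z l : @is_derive C_AbsRing C_NormedModule f z l -> @is_derive C_AbsRing (AbsRing_NormedModule C_AbsRing) f z l.
Proof. intros [H1 H2]. split. apply is_linear_scal_l. exact H2. Qed.

Lemma holo_const (c : C) z : holo (fun _ => c) z.
Proof. exists zero. apply (is_derive_const (K:=C_AbsRing) (V:=C_NormedModule)). Qed.

Lemma holo_id z : holo (fun w => w) z.
Proof. exists one. apply bridge. apply (is_derive_id (K:=C_AbsRing)). Qed.

Lemma holo_plus f g z : holo f z -> holo g z -> holo (fun w => f w + g w)%C z.
Proof. intros [df Hf] [dg Hg]. exists (plus df dg). apply (is_derive_plus (K:=C_AbsRing) (V:=C_NormedModule) f g z df dg Hf Hg). Qed.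

Lemma holo_minus f g z : holo f z -> holo g z -> holo (fun w => f w - g w)%C z.
Proof. intros [df Hf] [dg Hg]. exists (minus df dg). apply (is_derive_minus (K:=C_AbsRing) (V:=C_NormedModule) f g z df dg Hf Hg). Qed.

Lemma holo_mult f g z : holo f z -> holo g z -> holo (fun w => f w * g w)%C z.
Proof.
  intros [df Hf] [dg Hg]. eexists. apply bridge.
  apply (is_derive_mult (K:=C_AbsRing) f g z df dg (bridge2 _ _ _ Hf) (bridge2 _ _ _ Hg)).
  intros n m. apply Cmult_comm.
Qed.

Lemma holo_pow f z k : holo f z -> holo (fun w => Cpow (f w) k) z.
Proof.
  intros Hf. induction k as [|k IH]; simpl.
  - apply holo_const.
  - apply holo_mult; assumption.
Qed.

Lemma holo_comp f g z : holo g z -> holo f (g z) -> holo (fun w => f (g w)) z.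
Proof.
  intros [dg Hg] [df Hf]. eexists.
  apply (is_derive_comp (K:=C_AbsRing) (V:=C_NormedModule) f g z df dg Hf (bridge2 _ _ _ Hg)).
Qed.

Lemma holo_inv (z : C) : z <> 0%C -> holo (fun w => / w)%C z.
Proof.
  intros Hz. exists (- / (z * z))%C. split; [apply is_linear_scal_l|].
  intros x Hx. apply (is_filter_lim_locally_unique (K:=C_AbsRing) (V:=AbsRing_NormedModule C_AbsRing)) in Hx. subst x.
  intros eps.
  assert (Hm : 0 < Cmod z) by (apply Cmod_gt_0; exact Hz).
  set (m := Cmod z) in *.
  assert (He := cond_pos eps).
  assert (Hd : 0 < Rmin (m / 2) (eps * (m * m * m) / 2)).
  { apply Rmin_glb_lt; [lra|]. apply Rmult_lt_0_compat; [|lra].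
    apply Rmult_lt_0_compat; [lra|]. repeat apply Rmult_lt_0_compat; lra. }
  exists (mkposreal _ Hd). intros w Hw.
  change (Cmod (w - z)%C < Rmin (m / 2) (eps * (m * m * m) / 2)) in Hw.
  set (r := Cmod (w - z)%C) in *.
  assert (Hr1 : r < m / 2) by (eapply Rlt_le_trans; [exact Hw| apply Rmin_l]).
  assert (Hr2 : r < eps * (m * m * m) / 2) by (eapply Rlt_le_trans; [exact Hw| apply Rmin_r]).
  assert (Hr0 : 0 <= r) by apply Cmod_ge_0.
  assert (Hwm : m - r <= Cmod w).
  { unfold m. replace z with (w - (w - z))%C at 1 by ring.
    pose proof (Cmod_triangle w (- (w - z))%C) as T. rewrite Cmod_opp in T.
    unfold Cminus at 1. fold r in T. lra. }
  assert (Hw0 : (w : C) <> 0%C).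
  { intros E. rewrite E, Cmod_0 in Hwm. lra. }
  change (Cmod (minus (minus (/ w) (/ z)) (scal (minus w z) (- / (z * z))))%C <= eps * Cmod (minus w z)).
  replace (minus (minus (/ w) (/ z)) (scal (minus w z) (- / (z * z))))%C
    with ((w - z) * (w - z) / (w * (z * z)))%C.
  2:{ unfold minus, plus, opp, scal; simpl. unfold mult; simpl. field. split; assumption. }
  change (minus w z) with (w - z)%C. fold r.
  rewrite Cmod_div by (apply Cmult_neq_0; [exact Hw0 | apply Cmult_neq_0; exact Hz]).
  rewrite !Cmod_mult. fold r m.
  assert (Hwp : 0 < Cmod w) by lra.
  apply Rle_div_l; [apply Rmult_lt_0_compat; [lra | apply Rmult_lt_0_compat; lra]|].
  assert (r * r <= r * (eps * (m * m * m) / 2)) by (apply Rmult_le_compat_l; lra).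
  assert (eps * (m * m * m) / 2 <= eps * (Cmod w * (m * m))).
  { assert (m / 2 <= Cmod w) by lra.
    replace (eps * (m * m * m) / 2) with (eps * ((m/2) * (m * m))) by field.
    apply Rmult_le_compat_l; [lra|]. apply Rmult_le_compat_r; [nra | lra]. }
  nra.
Qed.


Definition holo_on f x0 x1 y0 y1 :=
  forall u v, x0 <= u <= x1 -> y0 <= v <= y1 -> holo f (u, v).

Lemma holo_on_bdc f x0 x1 y0 y1 : holo_on f x0 x1 y0 y1 -> x0 <= x1 -> y0 <= y1 -> bdc f x0 x1 y0 y1.
Proof.
  intros H Hx Hy. split; intros s Hs; split; apply holo_ctc, H; lra.
Qed.

Lemma holo_on_sub f x0 x1 y0 y1 a0 a1 b0 b1 :
  x0 <= a0 -> a1 <= x1 -> y0 <= b0 -> b1 <= y1 ->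
  holo_on f x0 x1 y0 y1 -> holo_on f a0 a1 b0 b1.
Proof. intros ? ? ? ? H u v Hu Hv. apply H; lra. Qed.

Lemma J_quad f x0 x1 y0 y1 : x0 <= x1 -> y0 <= y1 -> holo_on f x0 x1 y0 y1 ->
  J f x0 x1 y0 y1 =
  (J f x0 ((x0+x1)/2) y0 ((y0+y1)/2) + J f ((x0+x1)/2) x1 y0 ((y0+y1)/2) +
   J f x0 ((x0+x1)/2) ((y0+y1)/2) y1 + J f ((x0+x1)/2) x1 ((y0+y1)/2) y1)%C.
Proof.
  intros Hx Hy H.
  set (xm := (x0+x1)/2). set (ym := (y0+y1)/2).
  assert (Hxm : x0 <= xm <= x1) by (unfold xm; lra).
  assert (Hym : y0 <= ym <= y1) by (unfold ym; lra).
  assert (EH : forall y a b, y0 <= y <= y1 -> x0 <= a -> a <= b -> b <= x1 ->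
     ex_RInt (V:=CR) (fun u => f (u, y)) a b).
  { intros y a b Hy1 Ha Hab Hb. apply exH; [exact Hab|]. intros s Hs. apply holo_ctc, H; lra. }
  assert (EV : forall x a b, x0 <= x <= x1 -> y0 <= a -> a <= b -> b <= y1 ->
     ex_RInt (V:=CR) (fun v => f (x, v)) a b).
  { intros x a b Hx1 Ha Hab Hb. apply exV; [exact Hab|]. intros s Hs. apply holo_ctc, H; lra. }
  rewrite (J_splitX f x0 xm x1 y0 y1) by (apply EH; lra).
  rewrite (J_splitY f x0 xm y0 ym y1) by (apply EV; lra).
  rewrite (J_splitY f xm x1 y0 ym y1) by (apply EV; lra).
  ring.
Qed.

Record rct := Rct { rx0 : R; rx1 : R; ry0 : R; ry1 : R }.
Definition Jr f r := J f (rx0 r) (rx1 r) (ry0 r) (ry1 r).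
Definition xmid r := (rx0 r + rx1 r) / 2.
Definition ymid r := (ry0 r + ry1 r) / 2.
Definition q1 r := Rct (rx0 r) (xmid r) (ry0 r) (ymid r).
Definition q2 r := Rct (xmid r) (rx1 r) (ry0 r) (ymid r).
Definition q3 r := Rct (rx0 r) (xmid r) (ymid r) (ry1 r).
Definition q4 r := Rct (xmid r) (rx1 r) (ymid r) (ry1 r).

Definition step f r :=
  let c := Cmod (Jr f r) / 4 in
  if Rle_dec c (Cmod (Jr f (q1 r))) then q1 r
  else if Rle_dec c (Cmod (Jr f (q2 r))) then q2 r
  else if Rle_dec c (Cmod (Jr f (q3 r))) then q3 r
  else q4 r.

Definition wf r := rx0 r <= rx1 r /\ ry0 r <= ry1 r.
Definition hr f r := holo_on f (rx0 r) (rx1 r) (ry0 r) (ry1 r).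

Lemma step_J f r : wf r -> hr f r -> Cmod (Jr f r) / 4 <= Cmod (Jr f (step f r)).
Proof.
  intros [Hx Hy] H. unfold step.
  destruct (Rle_dec _ (Cmod (Jr f (q1 r)))) as [E1|E1]; [exact E1|].
  destruct (Rle_dec _ (Cmod (Jr f (q2 r)))) as [E2|E2]; [exact E2|].
  destruct (Rle_dec _ (Cmod (Jr f (q3 r)))) as [E3|E3]; [exact E3|].
  assert (Q := J_quad f _ _ _ _ Hx Hy H).
  unfold Jr, q1, q2, q3, q4, xmid, ymid in *; simpl in *.
  rewrite Q in *.
  set (A := J f (rx0 r) ((rx0 r + rx1 r) / 2) (ry0 r) ((ry0 r + ry1 r) / 2)) in *.
  set (B := J f ((rx0 r + rx1 r) / 2) (rx1 r) (ry0 r) ((ry0 r + ry1 r) / 2)) in *.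
  set (Cc := J f (rx0 r) ((rx0 r + rx1 r) / 2) ((ry0 r + ry1 r) / 2) (ry1 r)) in *.
  set (D := J f ((rx0 r + rx1 r) / 2) (rx1 r) ((ry0 r + ry1 r) / 2) (ry1 r)) in *.
  pose proof (Cmod_triangle (A + B + Cc) D).
  pose proof (Cmod_triangle (A + B) Cc).
  pose proof (Cmod_triangle A B).
  lra.
Qed.

Definition half r r' :=
  rx0 r <= rx0 r' /\ rx1 r' <= rx1 r /\ rx1 r' - rx0 r' = (rx1 r - rx0 r) / 2 /\
  ry0 r <= ry0 r' /\ ry1 r' <= ry1 r /\ ry1 r' - ry0 r' = (ry1 r - ry0 r) / 2.

Lemma step_half f r : wf r -> half r (step f r).
Proof.
  intros [Hx Hy]. unfold step.
  repeat (destruct Rle_dec); unfold half, q1, q2, q3, q4, xmid, ymid; simpl; lra.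
Qed.

Fixpoint sq f r k := match k with O => r | S k => step f (sq f r k) end.

Lemma sq_inv f r : wf r -> hr f r -> forall k,
  wf (sq f r k) /\ rx0 r <= rx0 (sq f r k) /\ rx1 (sq f r k) <= rx1 r /\
  ry0 r <= ry0 (sq f r k) /\ ry1 (sq f r k) <= ry1 r /\
  rx1 (sq f r k) - rx0 (sq f r k) = (rx1 r - rx0 r) * (/2)^k /\
  ry1 (sq f r k) - ry0 (sq f r k) = (ry1 r - ry0 r) * (/2)^k /\
  Cmod (Jr f r) * (/4)^k <= Cmod (Jr f (sq f r k)).
Proof.
  intros Hw Hh k. induction k as [|k IH].
  - simpl. destruct Hw. repeat split; lra.
  - destruct IH as (Hwk & A1 & A2 & A3 & A4 & A5 & A6 & A7).
    assert (Hhk : hr f (sq f r k)).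
    { unfold hr. apply (holo_on_sub f (rx0 r) (rx1 r) (ry0 r) (ry1 r)); try lra. exact Hh. }
    pose proof (step_half f _ Hwk) as (B1 & B2 & B3 & B4 & B5 & B6).
    pose proof (step_J f _ Hwk Hhk) as HJ.
    simpl. split; [split; lra|].
    repeat split; try lra.
Qed.

Lemma sq_mono f r : wf r -> forall k d,
  rx0 (sq f r k) <= rx0 (sq f r (k + d)) /\ rx1 (sq f r (k + d)) <= rx1 (sq f r k) /\
  ry0 (sq f r k) <= ry0 (sq f r (k + d)) /\ ry1 (sq f r (k + d)) <= ry1 (sq f r k).
Proof.
  intros Hw k d. induction d as [|d IH].
  - rewrite Nat.add_0_r. lra.
  - rewrite Nat.add_succ_r. simpl.
    assert (Hwk : wf (sq f r (k + d))).
    { clear IH. induction (k + d)%nat as [|m IHm]; [exact Hw|].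
      simpl. pose proof (step_half f _ IHm) as (B1 & B2 & B3 & B4 & B5 & B6).
      destruct IHm. split; lra. }
    pose proof (step_half f _ Hwk) as (B1 & B2 & B3 & B4 & B5 & B6). lra.
Qed.

Lemma nested_pt (lo hi : nat -> R) : (forall k j, lo k <= hi j) ->
  exists p, forall k, lo k <= p <= hi k.
Proof.
  intros H.
  destruct (completeness (fun z => exists k, z = lo k)) as [p [Hp1 Hp2]].
  - exists (hi O). intros z [k ->]. apply H.
  - exists (lo O). exists O. reflexivity.
  - exists p. intros k. split.
    + apply Hp1. exists k. reflexivity.
    + apply Hp2. intros z [j ->]. apply H.
Qed.

Lemma sq_cross f r : wf r -> forall k j,
  rx0 (sq f r k) <= rx1 (sq f r j) /\ ry0 (sq f r k) <= ry1 (sq f r j).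
Proof.
  intros Hw k j.
  assert (Hwf : forall m, wf (sq f r m)).
  { induction m as [|m IHm]; [exact Hw|]. simpl.
    pose proof (step_half f _ IHm) as (B1 & B2 & B3 & B4 & B5 & B6).
    destruct IHm. split; lra. }
  destruct (Nat.le_ge_cases k j) as [Hkj|Hkj].
  - replace j with (k + (j - k))%nat by lia.
    pose proof (sq_mono f r Hw k (j - k)). destruct (Hwf (k + (j - k))%nat). lra.
  - replace k with (j + (k - j))%nat by lia.
    pose proof (sq_mono f r Hw j (k - j)). destruct (Hwf (j + (k - j))%nat). lra.
Qed.

Lemma Cmod_le_sum (z : C) : Cmod z <= Rabs (fst z) + Rabs (snd z).
Proof.
  destruct z as [u v]. unfold Cmod; simpl.
  rewrite <- (sqrt_pow2 (Rabs u + Rabs v)) by (pose proof (Rabs_pos u); pose proof (Rabs_pos v); lra).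
  apply sqrt_le_1_alt.
  pose proof (Rabs_pos u); pose proof (Rabs_pos v).
  replace (u * (u * 1) + v * (v * 1)) with (Rabs u * Rabs u + Rabs v * Rabs v).
  - nra.
  - rewrite <- !Rabs_mult. rewrite !Rabs_right by nra. ring.
Qed.

Lemma holo_aff (c0 l p : C) w : holo (fun w => c0 + l * (w - p))%C w.
Proof.
  apply holo_plus; [apply holo_const|].
  apply holo_mult; [apply holo_const|].
  apply holo_minus; [apply holo_id | apply holo_const].
Qed.

Lemma small_pow c d : 0 < d -> exists k, c * (/2)^k < d.
Proof.
  intros Hd.
  destruct (pow_lt_1_zero (/2) ltac:(rewrite Rabs_right; lra) (d / (Rabs c + 1))) as [N HN].
  { apply Rdiv_lt_0_compat; [lra|]. pose proof (Rabs_pos c); lra. }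
  exists N. specialize (HN N (Nat.le_refl N)).
  assert (Hq : 0 < (/2)^N) by (apply pow_lt; lra).
  rewrite Rabs_right in HN by lra.
  pose proof (Rabs_pos c).
  apply Rle_lt_trans with (Rabs c * (/2)^N).
  - apply Rmult_le_compat_r; [lra | apply Rle_abs].
  - apply Rmult_lt_compat_r with (r := Rabs c + 1) in HN; [|lra].
    unfold Rdiv in HN. rewrite Rmult_assoc, Rinv_l, Rmult_1_r in HN by lra. nra.
Qed.

Lemma eps_le0 X K : 0 <= K -> (forall eps, 0 < eps -> X <= eps * K) -> X <= 0.
Proof.
  intros HK H. destruct (Rle_dec X 0) as [h|h]; [exact h|].
  exfalso. specialize (H (X / (2 * (K + 1))) ltac:(apply Rdiv_lt_0_compat; lra)).
  apply Rmult_le_compat_r with (r := 2 * (K + 1)) in H; [|lra].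
  replace (X / (2 * (K + 1)) * K * (2 * (K + 1))) with (X * K) in H by (field; lra).
  nra.
Qed.

Lemma goursat f x0 x1 y0 y1 : x0 <= x1 -> y0 <= y1 -> holo_on f x0 x1 y0 y1 ->
  J f x0 x1 y0 y1 = 0%C.
Proof.
  intros Hx Hy H.
  set (r := Rct x0 x1 y0 y1).
  assert (Hw : wf r) by (split; simpl; lra).
  assert (Hh : hr f r) by exact H.
  destruct (nested_pt (fun k => rx0 (sq f r k)) (fun k => rx1 (sq f r k))) as [px Hpx].
  { intros k j. apply (sq_cross f r Hw k j). }
  destruct (nested_pt (fun k => ry0 (sq f r k)) (fun k => ry1 (sq f r k))) as [py Hpy].
  { intros k j. apply (sq_cross f r Hw k j). }
  apply Cmod_eq_0. apply Rle_antisym; [|apply Cmod_ge_0].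
  set (a := x1 - x0). set (b := y1 - y0).
  apply (eps_le0 _ (2 * (a + b) ^ 2)); [unfold a, b; nra|].
  intros eps Heps.
  assert (Hp : holo f (px, py)).
  { apply H; [apply (Hpx O) | apply (Hpy O)]. }
  destruct Hp as [l Hl].
  destruct (deriv_eps f (px, py) l Hl eps Heps) as [d [Hd Hdd]].
  destruct (small_pow (a + b) d Hd) as [k Hk].
  destruct (sq_inv f r Hw Hh k) as (Hwk & A1 & A2 & A3 & A4 & A5 & A6 & A7).
  specialize (Hpx k). specialize (Hpy k). simpl in Hpx, Hpy.
  set (s := sq f r k) in *.
  set (q := (/2)^k) in *.
  assert (Hq : 0 < q) by (apply pow_lt; lra).
  simpl in A1, A2, A3, A4, A5, A6. fold a b in A5, A6.
  set (A := fun w => (f (px, py) + l * (w - (px, py)))%C).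
  assert (Hs : holo_on f (rx0 s) (rx1 s) (ry0 s) (ry1 s)).
  { apply (holo_on_sub f x0 x1 y0 y1); try lra. exact H. }
  destruct Hwk as [Hwx Hwy].
  assert (E : Jr f s = J (fun w => f w - A w)%C (rx0 s) (rx1 s) (ry0 s) (ry1 s)).
  { rewrite J_minus; try lra.
    - unfold A. rewrite J_aff. unfold Jr. ring.
    - apply holo_on_bdc; assumption.
    - apply holo_on_bdc; try lra. intros u v _ _. apply holo_aff. }
  assert (Kpt : forall u v, rx0 s <= u <= rx1 s -> ry0 s <= v <= ry1 s ->
     Cmod (f (u, v) - A (u, v))%C <= eps * ((a + b) * q)).
  { intros u v Hu Hv.
    assert (Hc : Cmod ((u, v) - (px, py))%C <= (a + b) * q).
    { eapply Rle_trans; [apply Cmod_le_sum|]. simpl.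
      assert (Rabs (u + - px) <= a * q) by (apply Rabs_le; lra).
      assert (Rabs (v + - py) <= b * q) by (apply Rabs_le; lra). lra. }
    assert (Hc' : Cmod ((u, v) - (px, py))%C < d) by lra.
    specialize (Hdd (u, v) Hc').
    unfold A. replace (f (u, v) - (f (px, py) + l * ((u, v) - (px, py))))%C
      with (f (u, v) - f (px, py) - l * ((u, v) - (px, py)))%C by ring.
    eapply Rle_trans; [exact Hdd|]. apply Rmult_le_compat_l; lra. }
  assert (Bd := J_bound (fun w => f w - A w)%C (eps * ((a + b) * q)) (rx0 s) (rx1 s) (ry0 s) (ry1 s) Hwx Hwy).
  assert (Bd' : Cmod (J (fun w => f w - A w)%C (rx0 s) (rx1 s) (ry0 s) (ry1 s)) <=
            2 * (rx1 s - rx0 s) * (eps * ((a + b) * q)) + 2 * (ry1 s - ry0 s) * (eps * ((a + b) * q))).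
  { apply Bd.
    - split; intros t Ht; split; apply holo_ctc, holo_minus;
        solve [apply Hs; lra | unfold A; apply holo_aff].
    - split; intros t Ht; split; apply Kpt; lra. }
  rewrite <- E, A5, A6 in Bd'.
  assert (Hq4 : (/4)^k = q * q).
  { unfold q. rewrite <- Rpow_mult_distr. f_equal. field. }
  rewrite Hq4 in A7.
  unfold Jr in A7. simpl in A7.
  assert (Cmod (J f x0 x1 y0 y1) * (q * q) <= eps * (2 * (a + b) ^ 2) * (q * q)).
  { eapply Rle_trans; [exact A7|]. eapply Rle_trans; [exact Bd'|]. right. ring. }
  apply Rmult_le_reg_r with (q * q); [nra | exact H0].
Qed.


Ltac neq := solve [lra | left; intro; lra | right; intro; lra | intro; lra].

Lemma J_five phi x0 x1 y0 y1 tx ty dl :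
  0 < dl -> x0 < tx - dl -> tx + dl < x1 -> y0 < ty - dl -> ty + dl < y1 ->
  (forall u v, x0 <= u <= x1 -> y0 <= v <= y1 -> (u <> tx \/ v <> ty) -> holo phi (u, v)) ->
  J phi x0 x1 y0 y1 = J phi (tx - dl) (tx + dl) (ty - dl) (ty + dl).
Proof.
  intros Hd H1 H2 H3 H4 Hh.
  assert (EH : forall y a b, y0 <= y <= y1 -> y <> ty -> x0 <= a -> a <= b -> b <= x1 ->
     ex_RInt (V:=CR) (fun u => phi (u, y)) a b).
  { intros y a b Hy Hne Ha Hab Hb. apply exH; [exact Hab|]. intros s Hs.
    apply holo_ctc, Hh; [lra | lra | right; exact Hne]. }
  assert (EV : forall x a b, x0 <= x <= x1 -> x <> tx -> y0 <= a -> a <= b -> b <= y1 ->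
     ex_RInt (V:=CR) (fun v => phi (x, v)) a b).
  { intros x a b Hx Hne Ha Hab Hb. apply exV; [exact Hab|]. intros s Hs.
    apply holo_ctc, Hh; [lra | lra | left; exact Hne]. }
  rewrite (J_splitX phi x0 (tx - dl) x1 y0 y1) by (apply EH; neq).
  rewrite (J_splitX phi (tx - dl) (tx + dl) x1 y0 y1) by (apply EH; neq).
  rewrite (J_splitY phi (tx - dl) (tx + dl) y0 (ty - dl) y1) by (apply EV; neq).
  rewrite (J_splitY phi (tx - dl) (tx + dl) (ty - dl) (ty + dl) y1) by (apply EV; neq).
  rewrite (goursat phi x0 (tx - dl) y0 y1) by (try lra; intros u v Hu Hv; apply Hh; neq).
  rewrite (goursat phi (tx + dl) x1 y0 y1) by (try lra; intros u v Hu Hv; apply Hh; neq).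
  rewrite (goursat phi (tx - dl) (tx + dl) y0 (ty - dl)) by (try lra; intros u v Hu Hv; apply Hh; neq).
  rewrite (goursat phi (tx - dl) (tx + dl) (ty + dl) y1) by (try lra; intros u v Hu Hv; apply Hh; neq).
  ring.
Qed.

Lemma Rabs_le_inv a b : Rabs a <= b -> - b <= a <= b.
Proof.
  intros H. pose proof (Rle_abs a). pose proof (Rle_abs (- a)). rewrite Rabs_Ropp in *. lra.
Qed.

Lemma neq_pair (u v tx ty : R) : (u <> tx \/ v <> ty) -> ((u, v) : C) <> (tx, ty).
Proof. intros [H|H] E; injection E; intros; contradiction. Qed.

Lemma holo_kern (t w : C) : w <> t -> holo (fun z => / (z - t))%C w.
Proof.
  intros Hne.
  apply (holo_comp (fun z => / z)%C (fun z => z - t)%C w).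
  - apply holo_minus; [apply holo_id | apply holo_const].
  - apply holo_inv. intros E. apply Hne.
    replace w with ((w - t) + t)%C by ring. rewrite E. ring.
Qed.

Lemma cauchy h x0 x1 y0 y1 tx ty : x0 < tx < x1 -> y0 < ty < y1 -> holo_on h x0 x1 y0 y1 ->
  J (fun w => h w * / (w - (tx, ty)))%C x0 x1 y0 y1 =
  (h (tx, ty) * J (fun w => / (w - (tx, ty)))%C x0 x1 y0 y1)%C.
Proof.
  intros Htx Hty H.
  set (t := ((tx, ty) : C)).
  set (phi1 := fun w => (h w * / (w - t))%C).
  set (phi2 := fun w => (/ (w - t))%C).
  assert (Hp2 : forall w, w <> t -> holo phi2 w) by (intros w Hw; apply holo_kern; exact Hw).
  assert (Hp1 : forall u v, x0 <= u <= x1 -> y0 <= v <= y1 -> (u <> tx \/ v <> ty) -> holo phi1 (u, v)).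
  { intros u v Hu Hv Hne. apply holo_mult; [apply H; lra|]. apply Hp2. apply neq_pair; exact Hne. }
  assert (Hp2' : forall u v, x0 <= u <= x1 -> y0 <= v <= y1 -> (u <> tx \/ v <> ty) -> holo phi2 (u, v)).
  { intros u v Hu Hv Hne. apply Hp2. apply neq_pair; exact Hne. }
  set (D := (J phi1 x0 x1 y0 y1 - h t * J phi2 x0 x1 y0 y1)%C).
  enough (HD : D = 0%C).
  { replace (J phi1 x0 x1 y0 y1) with (D + h t * J phi2 x0 x1 y0 y1)%C by (unfold D; ring).
    rewrite HD. ring. }
  destruct (H tx ty ltac:(lra) ltac:(lra)) as [l Hl].
  destruct (deriv_eps h t l Hl 1 ltac:(lra)) as [d1 [Hd1 Hdd]].
  set (K := Cmod l + 1).
  assert (HK : 0 <= K) by (unfold K; pose proof (Cmod_ge_0 l); lra).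
  apply Cmod_eq_0. apply Rle_antisym; [|apply Cmod_ge_0].
  apply (eps_le0 _ (8 * K)); [lra|]. intros eps Heps.
  set (m := Rmin (Rmin (tx - x0) (x1 - tx)) (Rmin (ty - y0) (y1 - ty))).
  assert (Hm : 0 < m).
  { unfold m. repeat apply Rmin_glb_lt; lra. }
  assert (Hm1 : m <= tx - x0 /\ m <= x1 - tx /\ m <= ty - y0 /\ m <= y1 - ty).
  { unfold m.
    pose proof (Rmin_l (Rmin (tx - x0) (x1 - tx)) (Rmin (ty - y0) (y1 - ty))).
    pose proof (Rmin_r (Rmin (tx - x0) (x1 - tx)) (Rmin (ty - y0) (y1 - ty))).
    pose proof (Rmin_l (tx - x0) (x1 - tx)). pose proof (Rmin_r (tx - x0) (x1 - tx)).
    pose proof (Rmin_l (ty - y0) (y1 - ty)). pose proof (Rmin_r (ty - y0) (y1 - ty)).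
    lra. }
  set (dl := Rmin eps (Rmin (d1 / 4) (m / 2))).
  assert (Hdl : 0 < dl) by (unfold dl; repeat apply Rmin_glb_lt; lra).
  assert (Hdl1 : dl <= eps /\ dl <= d1 / 4 /\ dl <= m / 2).
  { unfold dl. split; [apply Rmin_l|]. split.
    - eapply Rle_trans; [apply Rmin_r|]. apply Rmin_l.
    - eapply Rle_trans; [apply Rmin_r|]. apply Rmin_r. }
  assert (Pt : forall u v, Rabs (u - tx) <= dl -> Rabs (v - ty) <= dl -> (u <> tx \/ v <> ty) ->
     holo phi1 (u, v) /\ holo phi2 (u, v) /\
     Cmod (Cminus (phi1 (u, v)) (Cmult (h t) (phi2 (u, v)))) <= K).
  { intros u v Hu Hv Hne.
    apply Rabs_le_inv in Hu. apply Rabs_le_inv in Hv.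
    split; [apply Hp1; try lra; exact Hne|].
    split; [apply Hp2'; try lra; exact Hne|].
    assert (Hw : ((u, v) - t)%C <> 0%C).
    { intros E. apply (neq_pair u v tx ty Hne).
      replace ((u, v) : C) with (((u, v) - t) + t)%C by ring. rewrite E. unfold t. ring. }
    assert (Hc : Cmod ((u, v) - t)%C < d1).
    { eapply Rle_lt_trans; [apply Cmod_le_sum|]. simpl.
      assert (Rabs (u + - tx) <= dl) by (apply Rabs_le; lra).
      assert (Rabs (v + - ty) <= dl) by (apply Rabs_le; lra). lra. }
    specialize (Hdd (u, v) Hc).
    unfold phi1, phi2.
    replace (h (u, v) * / ((u, v) - t) - h t * / ((u, v) - t))%C
      with ((h (u, v) - h t) / ((u, v) - t))%C by (field; exact Hw).
    rewrite Cmod_div by exact Hw.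
    assert (Hcp : 0 < Cmod ((u, v) - t)%C) by (apply Cmod_gt_0; exact Hw).
    apply Rle_div_l; [exact Hcp|].
    replace (h (u, v) - h t)%C with ((h (u, v) - h t - l * ((u, v) - t)) + l * ((u, v) - t))%C by ring.
    eapply Rle_trans; [apply Cmod_triangle|]. rewrite Cmod_mult. unfold K. lra. }
  destruct Hm1 as (Hm1a & Hm1b & Hm1c & Hm1d). destruct Hdl1 as (Hdla & Hdlb & Hdlc).
  assert (Bh : forall s, tx - dl <= s <= tx + dl ->
     (holo phi1 (s, ty - dl) /\ holo phi2 (s, ty - dl) /\
      Cmod (Cminus (phi1 (s, ty - dl)) (Cmult (h t) (phi2 (s, ty - dl)))) <= K) /\
     (holo phi1 (s, ty + dl) /\ holo phi2 (s, ty + dl) /\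
      Cmod (Cminus (phi1 (s, ty + dl)) (Cmult (h t) (phi2 (s, ty + dl)))) <= K)).
  { intros s Hs. split; apply Pt.
    all: try (apply Rabs_le; lra).
    all: right; intro; lra. }
  assert (Bv : forall s, ty - dl <= s <= ty + dl ->
     (holo phi1 (tx - dl, s) /\ holo phi2 (tx - dl, s) /\
      Cmod (Cminus (phi1 (tx - dl, s)) (Cmult (h t) (phi2 (tx - dl, s)))) <= K) /\
     (holo phi1 (tx + dl, s) /\ holo phi2 (tx + dl, s) /\
      Cmod (Cminus (phi1 (tx + dl, s)) (Cmult (h t) (phi2 (tx + dl, s)))) <= K)).
  { intros s Hs. split; apply Pt.
    all: try (apply Rabs_le; lra).
    all: left; intro; lra. }
  assert (Hdiff : forall w, holo phi1 w -> holo phi2 w -> ctc (fun w => phi1 w - h t * phi2 w)%C w).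
  { intros w H1 H2. apply holo_ctc, holo_minus; [exact H1|]. apply holo_mult; [apply holo_const | exact H2]. }
  assert (Hb1 : bdc phi1 (tx - dl) (tx + dl) (ty - dl) (ty + dl)).
  { split; intros s Hs.
    - destruct (Bh s Hs) as [[A _] [B _]]. exact (conj (holo_ctc _ _ A) (holo_ctc _ _ B)).
    - destruct (Bv s Hs) as [[A _] [B _]]. exact (conj (holo_ctc _ _ A) (holo_ctc _ _ B)). }
  assert (Hb2 : bdc phi2 (tx - dl) (tx + dl) (ty - dl) (ty + dl)).
  { split; intros s Hs.
    - destruct (Bh s Hs) as [[_ [A _]] [_ [B _]]]. exact (conj (holo_ctc _ _ A) (holo_ctc _ _ B)).
    - destruct (Bv s Hs) as [[_ [A _]] [_ [B _]]]. exact (conj (holo_ctc _ _ A) (holo_ctc _ _ B)). }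
  assert (Hm3 : forall w, holo phi2 w -> holo (fun w => h t * phi2 w)%C w).
  { intros w Hw. apply holo_mult; [apply holo_const | exact Hw]. }
  assert (Hb3 : bdc (fun w => h t * phi2 w)%C (tx - dl) (tx + dl) (ty - dl) (ty + dl)).
  { split; intros s Hs.
    - destruct (Bh s Hs) as [[_ [A _]] [_ [B _]]]. exact (conj (holo_ctc _ _ (Hm3 _ A)) (holo_ctc _ _ (Hm3 _ B))).
    - destruct (Bv s Hs) as [[_ [A _]] [_ [B _]]]. exact (conj (holo_ctc _ _ (Hm3 _ A)) (holo_ctc _ _ (Hm3 _ B))). }
  assert (Hb4 : bdc (fun w => phi1 w - h t * phi2 w)%C (tx - dl) (tx + dl) (ty - dl) (ty + dl)).
  { split; intros s Hs.
    - destruct (Bh s Hs) as [[A1 [A2 _]] [B1 [B2 _]]]. exact (conj (Hdiff _ A1 A2) (Hdiff _ B1 B2)).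
    - destruct (Bv s Hs) as [[A1 [A2 _]] [B1 [B2 _]]]. exact (conj (Hdiff _ A1 A2) (Hdiff _ B1 B2)). }
  assert (Hbn : bnd (fun w => phi1 w - h t * phi2 w)%C K (tx - dl) (tx + dl) (ty - dl) (ty + dl)).
  { split; intros s Hs.
    - destruct (Bh s Hs) as [[_ [_ A]] [_ [_ B]]]. exact (conj A B).
    - destruct (Bv s Hs) as [[_ [_ A]] [_ [_ B]]]. exact (conj A B). }
  assert (L1 : x0 < tx - dl) by lra. assert (L2 : tx + dl < x1) by lra.
  assert (L3 : y0 < ty - dl) by lra. assert (L4 : ty + dl < y1) by lra.
  assert (L5 : tx - dl <= tx + dl) by lra. assert (L6 : ty - dl <= ty + dl) by lra.
  unfold D.
  rewrite (J_five phi1 x0 x1 y0 y1 tx ty dl Hdl L1 L2 L3 L4 Hp1).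
  rewrite (J_five phi2 x0 x1 y0 y1 tx ty dl Hdl L1 L2 L3 L4 Hp2').
  rewrite <- (J_Cmult (h t) phi2 _ _ _ _ L5 L6 Hb2).
  rewrite <- (J_minus phi1 (fun w => h t * phi2 w)%C _ _ _ _ L5 L6 Hb1 Hb3).
  eapply Rle_trans; [exact (J_bound _ K _ _ _ _ L5 L6 Hb4 Hbn)|].
  nra.
Qed.

Lemma snd_RInt_pos (g : R -> C) a b c : a < b ->
  (forall s, a <= s <= b -> @continuous R_UniformSpace CR g s) ->
  (forall s, a < s < b -> 0 < c * snd (g s)) -> 0 < c * snd (RInt (V:=CR) g a b).
Proof.
  intros Hab Hc Hp.
  assert (Hex : ex_RInt (V:=CR) g a b).
  { apply ex_RInt_continuous. rewrite Rmin_left, Rmax_right by lra. exact Hc. }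
  assert (E : c * snd (RInt (V:=CR) g a b) = RInt (fun s => c * snd (g s)) a b).
  { symmetry. apply (is_RInt_unique (V:=R_CompleteNormedModule)).
    apply (is_RInt_scal (V:=R_NormedModule) (fun s => snd (g s)) a b c).
    apply (is_RInt_fct_extend_snd (U:=R_NormedModule) (V:=R_NormedModule)).
    apply (RInt_correct (V:=CR)). exact Hex. }
  rewrite E. apply RInt_gt_0; [exact Hab | exact Hp |].
  intros s Hs. apply (continuous_mult (K:=R_AbsRing) (fun _ => c) (fun s => snd (g s))).
  - apply continuous_const.
  - apply (continuous_comp g snd). apply Hc; lra. destruct (g s). apply continuous_snd.
Qed.

Lemma fst_RInt_pos (g : R -> C) a b c : a < b ->
  (forall s, a <= s <= b -> @continuous R_UniformSpace CR g s) ->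
  (forall s, a < s < b -> 0 < c * fst (g s)) -> 0 < c * fst (RInt (V:=CR) g a b).
Proof.
  intros Hab Hc Hp.
  assert (Hex : ex_RInt (V:=CR) g a b).
  { apply ex_RInt_continuous. rewrite Rmin_left, Rmax_right by lra. exact Hc. }
  assert (E : c * fst (RInt (V:=CR) g a b) = RInt (fun s => c * fst (g s)) a b).
  { symmetry. apply (is_RInt_unique (V:=R_CompleteNormedModule)).
    apply (is_RInt_scal (V:=R_NormedModule) (fun s => fst (g s)) a b c).
    apply (is_RInt_fct_extend_fst (U:=R_NormedModule) (V:=R_NormedModule)).
    apply (RInt_correct (V:=CR)). exact Hex. }
  rewrite E. apply RInt_gt_0; [exact Hab | exact Hp |].
  intros s Hs. apply (continuous_mult (K:=R_AbsRing) (fun _ => c) (fun s => fst (g s))).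
  - apply continuous_const.
  - apply (continuous_comp g fst). apply Hc; lra. destruct (g s). apply continuous_fst.
Qed.

Lemma Im_J4 (a b c d : C) : Im (a + Ci * b - c - Ci * d)%C = snd a + fst b - snd c - fst d.
Proof. destruct a, b, c, d. simpl. ring. Qed.

Lemma inv_snd (z : C) : z <> 0%C -> snd (/ z)%C = - snd z / (fst z ^ 2 + snd z ^ 2).
Proof. intros. destruct z. simpl. reflexivity. Qed.

Lemma inv_fst (z : C) : z <> 0%C -> fst (/ z)%C = fst z / (fst z ^ 2 + snd z ^ 2).
Proof. intros. destruct z. simpl. reflexivity. Qed.

Ltac sqpos := rewrite ?Rmult_1_r; match goal with |- 0 < ?a * ?a + ?b * ?b =>
  first [ apply Rplus_le_lt_0_compat; [apply (Rle_0_sqr a) | apply (Rsqr_pos_lt b); intro; lra]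
        | apply Rplus_lt_le_0_compat; [apply (Rsqr_pos_lt a); intro; lra | apply (Rle_0_sqr b)] ] end.

Ltac invpos := match goal with |- context [/ ?D] =>
  assert (0 < / D) by (apply Rinv_0_lt_compat; sqpos) end.

Lemma I_pos x0 x1 y0 y1 tx ty : x0 < tx < x1 -> y0 < ty < y1 ->
  0 < Im (J (fun w => / (w - (tx, ty)))%C x0 x1 y0 y1).
Proof.
  intros Htx Hty. unfold J, HI, VI. rewrite Im_J4.
  assert (Ct : forall u v, (u <> tx \/ v <> ty) -> ctc (fun w => / (w - (tx, ty)))%C (u, v)).
  { intros u v Hne. apply holo_ctc, holo_kern, neq_pair. exact Hne. }
  assert (A1 : 0 < 1 * snd (RInt (V:=CR) (fun u => / ((u, y0) - (tx, ty)))%C x0 x1)).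
  { apply snd_RInt_pos; [lra | intros s Hs; apply (cont_h (fun w => / (w - (tx, ty)))%C s y0), Ct; right; intro; lra |].
    intros s Hs. simpl. apply Rmult_lt_0_compat; [lra|].
    unfold Rdiv. invpos. nra. }
  assert (A2 : 0 < 1 * fst (RInt (V:=CR) (fun v => / ((x1, v) - (tx, ty)))%C y0 y1)).
  { apply fst_RInt_pos; [lra | intros s Hs; apply (cont_v (fun w => / (w - (tx, ty)))%C x1 s), Ct; left; intro; lra |].
    intros s Hs. simpl. apply Rmult_lt_0_compat; [lra|].
    unfold Rdiv. invpos. nra. }
  assert (A3 : 0 < -1 * snd (RInt (V:=CR) (fun u => / ((u, y1) - (tx, ty)))%C x0 x1)).
  { apply snd_RInt_pos; [lra | intros s Hs; apply (cont_h (fun w => / (w - (tx, ty)))%C s y1), Ct; right; intro; lra |].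
    intros s Hs. simpl. unfold Rdiv.
    invpos. nra. }
  assert (A4 : 0 < -1 * fst (RInt (V:=CR) (fun v => / ((x0, v) - (tx, ty)))%C y0 y1)).
  { apply fst_RInt_pos; [lra | intros s Hs; apply (cont_v (fun w => / (w - (tx, ty)))%C x0 s), Ct; left; intro; lra |].
    intros s Hs. simpl. unfold Rdiv.
    invpos. nra. }
  lra.
Qed.

Lemma pow_bound a K Cst : 0 <= a -> 0 <= K -> 0 <= Cst ->
  (forall k, a ^ k <= Cst * K ^ k) -> a <= K.
Proof.
  intros Ha HK HC H. destruct (Rle_dec a K) as [h|h]; [exact h|]. exfalso.
  assert (Hap : 0 < a) by lra.
  assert (Hr : Rabs (K / a) < 1).
  { rewrite Rabs_right by (apply Rle_ge, Rdiv_le_0_compat; lra).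
    apply (proj1 (Rdiv_lt_1 K a Hap)); lra. }
  destruct (pow_lt_1_zero (K / a) Hr (/ (Cst + 1)) ltac:(apply Rinv_0_lt_compat; lra)) as [N HN].
  specialize (HN N (Nat.le_refl N)). specialize (H N).
  assert (Hp : 0 <= (K / a) ^ N) by (apply pow_le, Rdiv_le_0_compat; lra).
  rewrite Rabs_right in HN by lra.
  assert (HaN : 0 < a ^ N) by (apply pow_lt; lra).
  assert (E : (K / a) ^ N = K ^ N / a ^ N).
  { unfold Rdiv. rewrite Rpow_mult_distr, pow_inv. reflexivity. }
  rewrite E in HN.
  assert (K ^ N < a ^ N / (Cst + 1)).
  { apply Rmult_lt_compat_r with (r := a ^ N) in HN; [|lra].
    unfold Rdiv in *. rewrite Rmult_assoc, Rinv_l, Rmult_1_r in HN by lra. lra. }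
  assert (Cst * K ^ N <= Cst * (a ^ N / (Cst + 1))) by (apply Rmult_le_compat_l; lra).
  assert (Cst * (a ^ N / (Cst + 1)) < a ^ N).
  { replace (Cst * (a ^ N / (Cst + 1))) with (a ^ N * (Cst / (Cst + 1))) by (field; lra).
    rewrite <- (Rmult_1_r (a ^ N)) at 2. apply Rmult_lt_compat_l; [lra|].
    apply (proj1 (Rdiv_lt_1 Cst (Cst + 1) ltac:(lra))); lra. }
  lra.
Qed.

Lemma Cmod_ge_snd (z : C) : Rabs (snd z) <= Cmod z.
Proof. eapply Rle_trans; [apply Rmax_r | apply Rmax_Cmod]. Qed.
Lemma Cmod_ge_fst (z : C) : Rabs (fst z) <= Cmod z.
Proof. eapply Rle_trans; [apply Rmax_l | apply Rmax_Cmod]. Qed.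

Lemma maxmod f x0 x1 y0 y1 tx ty K : x0 < tx < x1 -> y0 < ty < y1 ->
  holo_on f x0 x1 y0 y1 -> bnd f K x0 x1 y0 y1 -> Cmod (f (tx, ty)) <= K.
Proof.
  intros Htx Hty H [Bh Bv].
  assert (HK : 0 <= K).
  { destruct (Bh x0 ltac:(lra)) as [B _]. pose proof (Cmod_ge_0 (f (x0, y0))). lra. }
  set (t := ((tx, ty) : C)).
  set (I := J (fun w => / (w - t))%C x0 x1 y0 y1).
  assert (HI : 0 < Cmod I).
  { pose proof (I_pos x0 x1 y0 y1 tx ty Htx Hty) as P. fold t I in P.
    pose proof (Cmod_ge_snd I). pose proof (Rle_abs (snd I)). change (0 < snd I) in P. lra. }
  set (m := Rmin (Rmin (tx - x0) (x1 - tx)) (Rmin (ty - y0) (y1 - ty))).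
  assert (Hm : 0 < m) by (unfold m; repeat apply Rmin_glb_lt; lra).
  assert (Hm1 : m <= tx - x0 /\ m <= x1 - tx /\ m <= ty - y0 /\ m <= y1 - ty).
  { unfold m.
    pose proof (Rmin_l (Rmin (tx - x0) (x1 - tx)) (Rmin (ty - y0) (y1 - ty))).
    pose proof (Rmin_r (Rmin (tx - x0) (x1 - tx)) (Rmin (ty - y0) (y1 - ty))).
    pose proof (Rmin_l (tx - x0) (x1 - tx)). pose proof (Rmin_r (tx - x0) (x1 - tx)).
    pose proof (Rmin_l (ty - y0) (y1 - ty)). pose proof (Rmin_r (ty - y0) (y1 - ty)).
    lra. }
  destruct Hm1 as (Hma & Hmb & Hmc & Hmd).
  set (P := 2 * (x1 - x0) + 2 * (y1 - y0)).
  apply (pow_bound _ _ (P / (m * Cmod I))); [apply Cmod_ge_0 | exact HK | |].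
  { apply Rdiv_le_0_compat; [unfold P; lra | apply Rmult_lt_0_compat; lra]. }
  intros k.
  set (h := fun w => Cpow (f w) k).
  assert (Hh : holo_on h x0 x1 y0 y1) by (intros u v Hu Hv; apply holo_pow, H; assumption).
  set (g := fun w => (h w * / (w - t))%C).
  assert (Pt : forall u v, x0 <= u <= x1 -> y0 <= v <= y1 -> (m <= Rabs (u - tx) \/ m <= Rabs (v - ty)) ->
            Cmod (f (u, v)) <= K -> ctc g (u, v) /\ Cmod (g (u, v)) <= K ^ k / m).
  { intros u v Hu Hv Hd Hf.
    assert (Hne : (u <> tx \/ v <> ty)).
    { destruct Hd as [Hd|Hd]; [left|right]; intro E; rewrite E, Rminus_diag, Rabs_R0 in Hd; lra. }
    assert (Hw : ((u, v) - t)%C <> 0%C).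
    { intros E. apply (neq_pair u v tx ty Hne).
      replace ((u, v) : C) with (((u, v) - t) + t)%C by ring. rewrite E. unfold t. ring. }
    split.
    - apply holo_ctc. unfold g. apply holo_mult; [apply Hh; assumption|].
      apply holo_kern. intro E. apply Hw. rewrite E. ring.
    - unfold g, h. rewrite Cmod_mult, Cmod_pow, Cmod_inv by exact Hw.
      assert (Hdm : m <= Cmod ((u, v) - t)%C).
      { destruct Hd as [Hd|Hd].
        - eapply Rle_trans; [exact Hd|]. apply (Cmod_ge_fst ((u, v) - t)%C).
        - eapply Rle_trans; [exact Hd|]. apply (Cmod_ge_snd ((u, v) - t)%C). }
      unfold Rdiv. apply Rmult_le_compat.
      + apply pow_le, Cmod_ge_0.
      + apply Rlt_le, Rinv_0_lt_compat. lra.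
      + apply pow_incr. split; [apply Cmod_ge_0 | exact Hf].
      + apply Rinv_le_contravar; lra. }
  assert (Hbd : bdc g x0 x1 y0 y1 /\ bnd g (K ^ k / m) x0 x1 y0 y1).
  { split; split; intros s Hs.
    - split; apply (Pt s); try lra; try (apply Bh; exact Hs); right.
      + rewrite Rabs_left by lra. lra.
      + rewrite Rabs_right by lra. lra.
    - split; apply (Pt _ s); try lra; try (apply Bv; exact Hs); left.
      + rewrite Rabs_left by lra. lra.
      + rewrite Rabs_right by lra. lra.
    - split; apply (Pt s); try lra; try (apply Bh; exact Hs); right.
      + rewrite Rabs_left by lra. lra.
      + rewrite Rabs_right by lra. lra.
    - split; apply (Pt _ s); try lra; try (apply Bv; exact Hs); left.
      + rewrite Rabs_left by lra. lra.
      + rewrite Rabs_right by lra. lra. }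
  destruct Hbd as [Hbd Hbn].
  pose proof (J_bound g _ x0 x1 y0 y1 ltac:(lra) ltac:(lra) Hbd Hbn) as JB.
  assert (E : J g x0 x1 y0 y1 = (h t * I)%C) by (apply cauchy; assumption).
  rewrite E, Cmod_mult in JB. unfold h in JB. rewrite Cmod_pow in JB.
  apply Rmult_le_reg_r with (Cmod I); [exact HI|].
  replace (P / (m * Cmod I) * K ^ k * Cmod I) with (P * (K ^ k / m)) by (field; lra).
  unfold P. lra.
Qed.


Lemma exp_le a b : a <= b -> exp a <= exp b.
Proof.
  intros H. destruct (Rle_lt_or_eq_dec a b H) as [h|h].
  - left. apply exp_increasing. exact h.
  - subst. lra.
Qed.

Lemma prod_lower (x : nat -> R) n (w : C) c : 0 <= c ->
  (forall i, (i < n)%nat -> c <= Cmod (w - RtoC (x i))%C) -> c ^ n <= Cmod (prod_lin x n w).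
Proof.
  intros Hc. induction n as [|n IH]; intros H.
  - simpl. rewrite Cmod_1. lra.
  - simpl. rewrite Cmod_mult.
    assert (A := IH (fun i Hi => H i ltac:(lia))).
    assert (B := H n ltac:(lia)).
    rewrite Rmult_comm. apply Rmult_le_compat; try lra; apply pow_le; lra.
Qed.

Lemma prod_upper (x : nat -> R) n (w : C) c :
  (forall i, (i < n)%nat -> Cmod (w - RtoC (x i))%C <= c) -> Cmod (prod_lin x n w) <= c ^ n.
Proof.
  induction n as [|n IH]; intros H.
  - simpl. rewrite Cmod_1. lra.
  - simpl. rewrite Cmod_mult.
    assert (A := IH (fun i Hi => H i ltac:(lia))).
    assert (B := H n ltac:(lia)).
    rewrite Rmult_comm. apply Rmult_le_compat; try lra; apply Cmod_ge_0.
Qed.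

Lemma sig_bound (sigma : R -> R) y v :
  (forall s t : R, 0 < s -> s <= t -> sigma s <= sigma t) -> 0 < y -> Rabs v <= y ->
  Rabs v * sigma (Rabs v) <= y * Rabs (sigma y).
Proof.
  intros Hm Hy Hv. pose proof (Rabs_pos v). pose proof (Rle_abs (sigma y)).
  pose proof (Rabs_pos (sigma y)).
  destruct (Rle_lt_or_eq_dec 0 (Rabs v) (Rabs_pos v)) as [h|h].
  - assert (sigma (Rabs v) <= sigma y) by (apply Hm; lra).
    apply Rle_trans with (Rabs v * Rabs (sigma y)).
    + apply Rmult_le_compat_l; lra.
    + apply Rmult_le_compat_r; lra.
  - rewrite <- h. rewrite Rmult_0_l. apply Rmult_le_pos; lra.
Qed.

Lemma psi_bd (g d : C) c m : 0 < c -> c <= Cmod d -> Cmod g <= m -> Cmod (g * / d)%C <= m / c.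
Proof.
  intros Hc Hd Hg.
  assert (Hd0 : d <> 0%C) by (intro E; rewrite E, Cmod_0 in Hd; lra).
  rewrite Cmod_mult, Cmod_inv by exact Hd0.
  unfold Rdiv. apply Rmult_le_compat; [apply Cmod_ge_0 | apply Rlt_le, Rinv_0_lt_compat; lra | exact Hg |].
  apply Rinv_le_contravar; lra.
Qed.

Lemma den_eq (e t u v : R) :
  (1 - Ci * RtoC e * ((u, v) - RtoC t))%C = ((1 + e * v), - (e * (u - t))) :> C.
Proof. apply injective_projections; simpl; ring. Qed.

Theorem lemma3p4 (sigma : R -> R) (F : C -> C) (n : nat) (a b : R) (x : nat -> R) :
  (forall s t : R, 0 < s -> s <= t -> sigma s <= sigma t) ->
  is_lim sigma p_infty p_infty ->
  entire F ->
  (forall z : C, Cmod (F z) <= exp (Rabs (Im z) * sigma (Rabs (Im z)))) ->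
  (forall i : nat, (i < n)%nat -> a <= x i <= b) ->
  has_zeros F x n ->
  forall t : R, a <= t <= b ->
  forall y : R, 0 < y ->
  Cmod (F (RtoC t)) <= (b - a) ^ n * (exp (y * sigma y) / y ^ n).
Proof.
  intros Hmono Hlim Hent HF Hx [G [HG HFG]] t Ht y Hy.
  set (E := exp (y * sigma y)).
  set (M := E / y ^ n).
  assert (HE : 0 < E) by apply exp_pos.
  assert (Hyn : 0 < y ^ n) by (apply pow_lt; lra).
  assert (HM : 0 < M) by (apply Rdiv_lt_0_compat; lra).
  set (B := exp (y * Rabs (sigma y))).
  assert (HB : 0 < B) by apply exp_pos.
  assert (Hhor : forall u v, Rabs v = y -> Cmod (G (u, v)) <= M).
  { intros u v Hv.
    assert (Hp : y ^ n <= Cmod (prod_lin x n (u, v))).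
    { apply prod_lower; [lra|]. intros i Hi.
      eapply Rle_trans; [|apply (Cmod_ge_snd ((u, v) - RtoC (x i))%C)].
      simpl. rewrite Ropp_0, Rplus_0_r. lra. }
    assert (HFw := HF (u, v)). simpl in HFw. rewrite Hv in HFw. fold E in HFw.
    rewrite HFG, Cmod_mult in HFw.
    apply Rmult_le_reg_r with (y ^ n); [exact Hyn|].
    unfold M. replace (E / y ^ n * y ^ n) with E by (field; lra).
    eapply Rle_trans; [|exact HFw]. apply Rmult_le_compat_l; [apply Cmod_ge_0 | exact Hp]. }
  assert (Hver : forall u v, Rabs v <= y -> (forall i, (i < n)%nat -> 1 <= Rabs (u - x i)) ->
             Cmod (G (u, v)) <= B).
  { intros u v Hv Hu.
    assert (Hp : 1 ^ n <= Cmod (prod_lin x n (u, v))).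
    { apply prod_lower; [lra|]. intros i Hi.
      eapply Rle_trans; [|apply (Cmod_ge_fst ((u, v) - RtoC (x i))%C)].
      simpl. apply Hu. exact Hi. }
    rewrite pow1 in Hp.
    assert (HFw := HF (u, v)). simpl in HFw.
    rewrite HFG, Cmod_mult in HFw.
    assert (Hs := sig_bound sigma y v Hmono Hy Hv).
    assert (exp (Rabs v * sigma (Rabs v)) <= B) by (apply exp_le; exact Hs).
    assert (Cmod (G (u, v)) * 1 <= Cmod (G (u, v)) * Cmod (prod_lin x n (u, v)))
      by (apply Rmult_le_compat_l; [apply Cmod_ge_0 | exact Hp]).
    lra. }
  assert (HGt : Cmod (G (t, 0)) <= M).
  { set (X := Cmod (G (t, 0))).
    assert (HX : 0 <= X) by apply Cmod_ge_0.
    assert (Key : forall e, 0 < e -> e * y < 1 -> X * (1 - e * y) <= M).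
    { intros e He Hey.
      assert (Hba : 0 <= b - a) by lra.
      assert (HBM : 0 <= B / (e * M)) by (apply Rdiv_le_0_compat; [lra | apply Rmult_lt_0_compat; lra]).
      set (L := (b - a) + 1 + B / (e * M)).
      assert (HL : (b - a) + 1 <= L) by (unfold L; lra).
      assert (HLB : B <= e * M * L).
      { unfold L. assert (e * M * (B / (e * M)) = B) by (field; split; lra).
        assert (0 <= e * M * ((b - a) + 1)) by (apply Rmult_le_pos; [apply Rmult_le_pos|]; lra).
        rewrite Rmult_plus_distr_l. lra. }
      set (Psi := fun w => (G w * / (1 - Ci * RtoC e * (w - RtoC t)))%C).
      assert (Hhol : holo_on Psi (t - L) (t + L) (- y) y).
      { intros u v Hu Hv. unfold Psi. apply holo_mult; [apply HG|].
        apply (holo_comp (fun z => / z)%C (fun w => 1 - Ci * RtoC e * (w - RtoC t))%C).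
        - apply holo_minus; [apply holo_const|].
          apply holo_mult; [apply holo_const|].
          apply holo_minus; [apply holo_id | apply holo_const].
        - apply holo_inv. rewrite den_eq. intro E0. injection E0. intros _ E1. nra. }
      assert (Hbnd : bnd Psi (M / (1 - e * y)) (t - L) (t + L) (- y) y).
      { split; intros s Hs.
        - split; unfold Psi; apply psi_bd; try lra.
          + rewrite den_eq. eapply Rle_trans; [|apply Cmod_ge_fst]. simpl.
            rewrite Rabs_right; nra.
          + apply Hhor. rewrite Rabs_Ropp, Rabs_right; lra.
          + rewrite den_eq. eapply Rle_trans; [|apply Cmod_ge_fst]. simpl.
            rewrite Rabs_right; nra.
          + apply Hhor. rewrite Rabs_right; lra.
        - assert (Hs' : Rabs s <= y) by (apply Rabs_le; lra).
          assert (Hm' : M <= M / (1 - e * y)).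
          { apply Rmult_le_reg_r with (1 - e * y); [lra|].
            replace (M / (1 - e * y) * (1 - e * y)) with M by (field; lra). nra. }
          split; unfold Psi.
          + eapply Rle_trans; [|exact Hm'].
            replace M with (M * (e * L) / (e * L)) by (field; split; lra).
            apply psi_bd; [nra | |].
            * rewrite den_eq. eapply Rle_trans; [|apply Cmod_ge_snd]. simpl.
              rewrite Rabs_Ropp. replace (e * (t - L - t)) with (- (e * L)) by ring.
              rewrite Rabs_Ropp, Rabs_right; nra.
            * eapply Rle_trans; [apply Hver; [exact Hs'|]|].
              { intros i Hi. destruct (Hx i Hi). rewrite Rabs_left1; lra. }
              lra.
          + eapply Rle_trans; [|exact Hm'].
            replace M with (M * (e * L) / (e * L)) by (field; split; lra).
            apply psi_bd; [nra | |].
            * rewrite den_eq. eapply Rle_trans; [|apply Cmod_ge_snd]. simpl.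
              rewrite Rabs_Ropp. replace (e * (t + L - t)) with (e * L) by ring.
              rewrite Rabs_right; nra.
            * eapply Rle_trans; [apply Hver; [exact Hs'|]|].
              { intros i Hi. destruct (Hx i Hi). rewrite Rabs_right; lra. }
              lra. }
      assert (Hmx := maxmod Psi (t - L) (t + L) (- y) y t 0 (M / (1 - e * y))
                       ltac:(lra) ltac:(lra) Hhol Hbnd).
      unfold Psi in Hmx. rewrite den_eq in Hmx.
      replace ((1 + e * 0), - (e * (t - t))) with (RtoC 1) in Hmx
        by (apply injective_projections; simpl; ring).
      replace (/ RtoC 1)%C with (RtoC 1) in Hmx by (apply injective_projections; simpl; field).
      rewrite Cmult_1_r in Hmx.
      fold X in Hmx.
      apply Rmult_le_reg_r with (/ (1 - e * y)); [apply Rinv_0_lt_compat; lra|].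
      replace (X * (1 - e * y) * / (1 - e * y)) with X by (field; lra).
      exact Hmx. }
    assert (X - M <= 0).
    { apply (eps_le0 _ (2 * y * X)); [nra|]. intros e0 He0.
      set (e := Rmin e0 (1 / (2 * y))).
      assert (He : 0 < e) by (apply Rmin_glb_lt; [lra | apply Rdiv_lt_0_compat; lra]).
      assert (He1 : e <= e0) by apply Rmin_l.
      assert (He2 : e <= 1 / (2 * y)) by apply Rmin_r.
      assert (Hey : e * y <= 1 / 2).
      { apply Rmult_le_compat_r with (r := y) in He2; [|lra].
        replace (1 / (2 * y) * y) with (1 / 2) in He2 by (field; lra). lra. }
      specialize (Key e He ltac:(lra)).
      assert (e * y * X <= e0 * y * X) by (apply Rmult_le_compat_r; [lra|]; apply Rmult_le_compat_r; lra).
      assert (0 <= e0 * y * X) by (apply Rmult_le_pos; [apply Rmult_le_pos|]; lra).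
      lra. }
    lra. }
  change (RtoC t) with ((t, 0) : C).
  rewrite HFG, Cmod_mult.
  assert (Hp : Cmod (prod_lin x n (t, 0)) <= (b - a) ^ n).
  { apply prod_upper. intros i Hi. destruct (Hx i Hi).
    change ((t, 0) : C) with (RtoC t). rewrite <- RtoC_minus, Cmod_R.
    apply Rabs_le. lra. }
  rewrite Rmult_comm. fold E M.
  apply Rmult_le_compat; [apply Cmod_ge_0 | apply Cmod_ge_0 | exact Hp | exact HGt].
Qed.
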